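(* Let $m\ge 3$ and let $WC_m$ denote the fully whiskered $2m$-cycle graph. Then $M_2(WC_m)\simeq S^{2m-1}$.
   Context: The fully whiskered graph of a graph $G$ is obtained by attaching a leaf (a new vertex joined by one edge) to every vertex of $G$; $WC_m$ is the fully whiskered graph of the cycle on $2m$ vertices. A $2$-matching of a graph is a set of edges such that every vertex has degree at most $2$ in it. $M_2(G)$ is the simplicial complex whose vertices are the edges of $G$ and whose faces are the $2$-matchings of $G$. *)

(* Defs.v *)
From HB Require Import structures.
From mathcomp Require Import all_boot all_order all_algebra.
From mathcomp Require Import all_classical all_reals topology normedtype.
Import Order.TTheory GRing.Theory Num.Theory.
Import numFieldNormedType.Exports.
Local Open Scope ring_scope.

Definition edge_set (V : finType) (adj : rel V) : {set {set V}} :=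
  [set [set x; y] | x in V, y in V & adj x y].

Definition cycle_adj (n : nat) : rel 'I_n :=
  fun i j => (val j == (val i).+1 %% n)%N || (val i == (val j).+1 %% n)%N.

(* Fully whiskered graph W(G): vertices inl v (original) and inr v (the new
   leaf attached to v); edges are the edges of G plus one edge {v, leaf v}. *)
Definition whisker_adj (V : finType) (adj : rel V) : rel (V + V)%type :=
  fun a b => match a, b with
             | inl x, inl y => adj x y
             | inl x, inr y => x == y
             | inr x, inl y => x == y
             | inr _, inr _ => false
             end.

Definition WC_adj (m : nat) : rel ('I_(2 * m) + 'I_(2 * m))%type :=
  @whisker_adj _ (cycle_adj (2 * m)).

Definition two_matching (V : finType) (adj : rel V) (F : {set {set V}}) : bool :=
  (F \subset edge_set _ adj) && [forall v, #|[set e in F | v \in e]| <= 2]%N.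

(* The simplicial complex M_2(G): its vertices are the edges of G (which are
   elements of {set V}); its faces are the 2-matchings. *)
Definition M2 (V : finType) (adj : rel V) : {set {set {set V}}} :=
  [set F | two_matching _ adj F].

Local Open Scope classical_set_scope.

Definition realization (R : realType) (I : finType) (K : {set {set I}})
  : set {ptws I -> R} :=
  [set x | (forall i, 0 <= x i) /\ (\sum_(i : I) x i = 1) /\
           [set i | x i != 0]%SET \in K].

Definition unit_sphere (R : realType) (d : nat) : set {ptws 'I_d.+1 -> R} :=
  [set y | \sum_(i < d.+1) y i ^+ 2 = 1].

(* p, q : A -> A (maps of ambient spaces that map A into A) are homotopic
   through maps A -> A. *)
Definition homotopic_on (R : realType) (X : topologicalType) (A : set X)
  (p q : X -> X) : Prop :=
  exists H : (R * X)%type -> X,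
    {within [set t : R | 0 <= t <= 1] `*` A, continuous H} /\
    (forall t x, 0 <= t <= 1 -> A x -> A (H (t, x))) /\
    (forall x, A x -> H (0, x) = p x /\ H (1, x) = q x).

Definition homotopy_equivalent (R : realType) (X Y : topologicalType)
  (A : set X) (B : set Y) : Prop :=
  exists (f : X -> Y) (g : Y -> X),
    {within A, continuous f} /\ f @` A `<=` B /\
    {within B, continuous g} /\ g @` B `<=` A /\
    homotopic_on R X A (g \o f) id /\ homotopic_on R Y B (f \o g) id.

(* Main.v *)
Require Import Defs.
From HB Require Import structures.
From mathcomp Require Import all_boot all_order all_algebra.
From mathcomp Require Import all_classical all_reals topology normedtype.
Import numFieldNormedType.Exports.
From mathcomp Require Import zify lra realfun.
Import Order.TTheory GRing.Theory Num.Theory.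
Section Comb.
Variable n : nat.
Hypothesis n2 : (1 < n)%N.
Local Notation N := n.+1.
Local Notation V := ('I_N + 'I_N)%type.
Local Notation s := (@ordS N).

Definition cE (j : 'I_N) : {set V} := [set inl j; inl (s j)].
Definition wE (j : 'I_N) : {set V} := [set inl j; inr j].

Lemma sval (j : 'I_N) : val (s j) = (j.+1 %% N)%N.
Proof. by []. Qed.

Lemma s_neq (j : 'I_N) : s j != j.
Proof.
apply/eqP => /(congr1 val); rewrite sval.
case: j => j /= jl.
have [h|h] := ltnP j.+1 N.
  by rewrite modn_small //; lia.
have -> : j.+1 = N by lia.
by rewrite modnn; lia.
Qed.

Lemma ss_neq (j : 'I_N) : s (s j) != j.
Proof.
apply/eqP => /(congr1 val); rewrite !sval.
case: j => j /= jl.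
have [h|h] := ltnP j.+1 N.
  rewrite (modn_small h).
  have [h2|h2] := ltnP j.+2 N.
    by rewrite modn_small //; lia.
  have -> : j.+2 = N by lia.
  by rewrite modnn; lia.
have -> : j.+1 = N by lia.
by rewrite modnn modn_small //; lia.
Qed.

Lemma cycle_adjE (i j : 'I_N) : cycle_adj N i j = (j == s i) || (i == s j).
Proof. by []. Qed.

Lemma inlI (a b : 'I_N) : (inl a : V) = inl b -> a = b.
Proof. by move/(congr1 (fun x : V => match x with inl a => a | inr a => a end)). Qed.
Lemma inrI (a b : 'I_N) : (inr a : V) = inr b -> a = b.
Proof. by move/(congr1 (fun x : V => match x with inl a => a | inr a => a end)). Qed.

Lemma cE_inj : injective cE.
Proof.
move=> j k /setP H.
move: (H (inl j)); rewrite !inE eqxx /= => /esym/orP[/eqP/inlI //|/eqP/inlI ejk].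
move: (H (inl (s j))); rewrite !inE eqxx orbT /= => /esym/orP[/eqP/inlI e|/eqP/inlI e].
  by move: (ss_neq k); rewrite -ejk e eqxx.
exact: ordS_inj e.
Qed.

Lemma wE_inj : injective wE.
Proof.
move=> j k /setP H.
move: (H (inr j)); rewrite !inE eqxx /=.
by move=> /esym/eqP/inrI.
Qed.

Lemma cE_wE j k : cE j != wE k.
Proof.
apply/eqP => /setP H.
by have := H (inr k); rewrite !inE eqxx orbT.
Qed.

Definition adjW := whisker_adj _ (cycle_adj N).

Lemma edgeP e : e \in edge_set _ adjW -> exists j, e = cE j \/ e = wE j.
Proof.
case/imset2P => x y _; rewrite inE => hxy ->.
case: x y hxy => [a|a] [b|b] //=.
- rewrite cycle_adjE => /orP[/eqP->|/eqP->]; first by exists a; left.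
  by exists b; left; rewrite /cE finset.setUC.
- by move=> /eqP <-; exists a; right.
- by move=> /eqP <-; exists a; right; rewrite /wE finset.setUC.
Qed.

Lemma cE_edge j : cE j \in edge_set _ adjW.
Proof.
apply/imset2P; exists (inl j) (inl (s j)) => //.
by rewrite inE /= cycle_adjE eqxx.
Qed.

Lemma wE_edge j : wE j \in edge_set _ adjW.
Proof.
apply/imset2P; exists (inl j) (inr j) => //.
by rewrite inE /= eqxx.
Qed.

Lemma card2_le (T : finType) (a b : T) : (#|[set a; b]| <= 2)%N.
Proof. by rewrite cards2; case: (a != b). Qed.

Lemma card3 (T : finType) (a b c : T) : a != b -> a != c -> b != c -> #|[set a; b; c]| = 3.
Proof.
move=> ab ac bc.
by rewrite -finset.setUA cardsU1 cards2 !inE negb_or ab ac bc.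
Qed.

Lemma card3I_le (T : finType) (a b c : T) (F : {set T}) :
  ~~ [&& a \in F, b \in F & c \in F] -> (#|[set a; b; c] :&: F| <= 2)%N.
Proof.
move=> H.
have key : forall x y : T, [set a; b; c] :&: F \subset [set x; y] -> (#|[set a; b; c] :&: F| <= 2)%N.
  by move=> x y sub; apply: leq_trans (subset_leq_card sub) _; rewrite cards2; case: (x != y).
case: (boolP (a \in F)) => ha; last first.
  apply: (key b c); apply/fintype.subsetP => e; rewrite !inE.
  by case/andP=> /orP[/orP[]|] /eqP -> eF; rewrite ?eqxx ?orbT //; rewrite eF in ha.
case: (boolP (b \in F)) => hb; last first.
  apply: (key a c); apply/fintype.subsetP => e; rewrite !inE.
  by case/andP=> /orP[/orP[]|] /eqP -> eF; rewrite ?eqxx ?orbT //; rewrite eF in hb.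
case: (boolP (c \in F)) => hc; last first.
  apply: (key a b); apply/fintype.subsetP => e; rewrite !inE.
  by case/andP=> /orP[/orP[]|] /eqP -> eF; rewrite ?eqxx ?orbT //; rewrite eF in hc.
by rewrite ha hb hc in H.
Qed.

Lemma M2E (F : {set {set V}}) :
  F \in M2 _ adjW <->
  (F \subset edge_set _ adjW /\
   forall j, ~ [/\ cE j \in F, wE (s j) \in F & cE (s j) \in F]).
Proof.
rewrite inE /two_matching; split.
  case/andP => -> /forallP H; split => // j [h1 h2 h3].
  have := H (inl (s j)).
  have sub : [set cE j; wE (s j); cE (s j)] \subset [set e in F | inl (s j) \in e].
    apply/fintype.subsetP => e; rewrite !inE => /orP[/orP[/eqP->|/eqP->]|/eqP->]; rewrite ?h1 ?h2 ?h3 /=.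
    - by rewrite /cE !inE eqxx orbT.
    - by rewrite /wE !inE eqxx.
    - by rewrite /cE !inE eqxx.
  have := subset_leq_card sub.
  rewrite card3; first by move=> h h'; have := leq_trans h h'.
  - exact: cE_wE.
  - by rewrite (inj_eq cE_inj) eq_sym s_neq.
  - by rewrite eq_sym cE_wE.
move=> [FE H]; rewrite FE /=; apply/forallP => v.
have Fe : forall e, e \in F -> exists j, e = cE j \/ e = wE j.
  by move=> e eF; apply: edgeP; apply: (fintype.subsetP FE e eF).
case: v => [k|k].
- set p := ord_pred k.
  have spk : s p = k by rewrite /p ord_predK.
  have sub : [set e in F | inl k \in e] \subset [set cE p; wE k; cE k].
    apply/fintype.subsetP => e; rewrite !inE => /andP[eF ke].
    have [j [ej|ej]] := Fe e eF; subst e.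
    + move: ke; rewrite /cE !inE => /orP[/eqP/inlI <-|/eqP/inlI kj]; first by rewrite eqxx ?orbT ?orTb.
      have -> : j = p by apply: ordS_inj; rewrite spk kj.
      by rewrite eqxx ?orbT ?orTb.
    + move: ke; rewrite /wE !inE => /orP[/eqP/inlI <-|//]; by rewrite eqxx ?orbT ?orTb.
  have Hn := H p; rewrite spk in Hn.
  apply: leq_trans (subset_leq_card (_ : _ \subset [set cE p; wE k; cE k] :&: F)) _.
    by rewrite finset.subsetI sub; apply/fintype.subsetP => e; rewrite inE => /andP[].
  apply: card3I_le; apply/negP => /and3P[h1 h2 h3]; exact: Hn.
- apply: leq_trans (subset_leq_card (_ : _ \subset [set wE k])) _; last by rewrite cards1.
  apply/fintype.subsetP => e; rewrite !inE => /andP[eF ke].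
  have [j [ej|ej]] := Fe e eF; subst e.
  + by move: ke; rewrite /cE !inE.
  + by move: ke; rewrite /wE !inE => /eqP[->].
Qed.

End Comb.
Local Open Scope ring_scope.

Section RealKey.
Variable R : realType.
Variable n : nat.
Local Notation N := n.+1.
Local Notation s := (@ordS N).
Variables a b : 'I_N -> R.
Hypothesis a0 : forall i, 0 <= a i.
Hypothesis b0 : forall i, 0 <= b i.
Hypothesis noT : forall j, ~ [/\ a j != 0, b (s j) != 0 & a (s j) != 0].

Definition yk i := a i - b i - Num.min (a (s i)) (b (s i)).

Lemma min_pos i : 0 < Num.min (a i) (b i) -> 0 < a i /\ 0 < b i.
Proof. by rewrite lt_min => /andP[]. Qed.

Lemma min_ge0 i : 0 <= Num.min (a i) (b i).
Proof. by rewrite le_min a0 b0. Qed.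

Lemma neq0_pos i : a i != 0 -> 0 < a i.
Proof. by move=> h; rewrite lt_def h a0. Qed.

Lemma F2 j : 0 < a (s j) -> 0 < b (s j) -> a j = 0 /\ yk j < 0.
Proof.
move=> ha hb.
have aj : a j = 0.
  apply/eqP; apply/negP => h; apply: (noT j); split.
    by apply/negP. by rewrite (gt_eqF hb). by rewrite (gt_eqF ha).
split => //; rewrite /yk aj.
have : 0 < Num.min (a (s j)) (b (s j)) by rewrite lt_min ha hb.
have := b0 j; lra.
Qed.

Lemma key_sign j :
  ~ [/\ (a j != 0) || (0 < yk j), (b (s j) != 0) || (yk (s j) < 0)
      & (a (s j) != 0) || (0 < yk (s j))].
Proof.
set k := s j.
move=> [h1 h2 h3].
have F2' : 0 < a k -> 0 < b k -> False.
  move=> ha hb; have [aj yj] := F2 j ha hb.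
  by move: h1; rewrite aj eqxx /= ltNge (ltW yj).
have bk0 := b0 k; have ak0 := a0 k.
have m0 := min_ge0 (s k).
case: (ltP (yk k) 0) => yk0.
- have akp : 0 < a k.
    by move: h3; rewrite ltNge (ltW yk0) orbF => /neq0_pos.
  case: (boolP (b k == 0)) => bk; last first.
    by apply: F2' => //; rewrite lt_def bk bk0.
  move: yk0; rewrite /yk (eqP bk) subr0 => yk0.
  have mp : 0 < Num.min (a (s k)) (b (s k)) by lra.
  have [h4 h5] := @min_pos _ mp.
  apply: (noT k); split; by rewrite gt_eqF.
- have bkp : 0 < b k.
    by move: h2; rewrite ltNge yk0 orbF => h; rewrite lt_def h bk0.
  have akp : 0 < a k.
    case/orP: h3 => [/neq0_pos //|].
    rewrite /yk => h; lra.
  exact: F2'.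
Qed.

Lemma yk_nonzero : (forall i, yk i = 0) -> forall i, a i = 0 /\ b i = 0.
Proof.
move=> y0.
have st1 : forall j, Num.min (a (s j)) (b (s j)) = 0.
  move=> j; have [//|h] := eqVneq (Num.min (a (s j)) (b (s j))) 0.
  have mp : 0 < Num.min (a (s j)) (b (s j)) by rewrite lt_def h min_ge0.
  have [ha hb] := @min_pos _ mp.
  have [aj yj] := F2 j ha hb.
  by move: yj; rewrite y0 ltxx.
have st2 : forall j, a j = b j.
  move=> j; have := y0 j; rewrite /yk st1; lra.
move=> i; have := st1 (ord_pred i); rewrite ord_predK -(st2 i) minxx => h.
by split => //; rewrite -(st2 i).
Qed.

End RealKey.
Local Open Scope classical_set_scope.

Section Cont.
Variable R : realType.

Lemma ptws_cvgP (I : choiceType) (F : set_system {ptws I -> R})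
  (f : {ptws I -> R}) : Filter F ->
  (forall i, (fun g : {ptws I -> R} => g i) @ F --> f i) -> F --> f.
Proof.
move=> FF H.
have := @pointwise_cvgP (discrete_topology I) R F f FF.
by move=> [_ ]; apply.
Qed.

Lemma ptws_eval_cont (I : choiceType) (i : I) :
  continuous (fun g : {ptws I -> R} => g i).
Proof.
move=> f.
have := @pointwise_cvgP (discrete_topology I) R (nbhs f) f _.
move=> [] H _; exact: H.
Qed.

Lemma cont_sum (T : topologicalType) (I : finType) (h : I -> T -> R) (x : T) :
  (forall i, {for x, continuous (h i)}) ->
  {for x, continuous (fun p => \sum_(i : I) h i p)}.
Proof.
move=> H; rewrite /continuous_at.
rewrite unlock /reducebig.
elim: (index_enum I) => [|i r IH] /=.
  exact: cvg_cst.
exact: (continuousD (H i) IH).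
Qed.

Lemma fst_cont (T U : topologicalType) : continuous (@fst T U).
Proof. by move=> p; apply: cvg_fst. Qed.

Lemma snd_cont (T U : topologicalType) : continuous (@snd T U).
Proof. by move=> p; apply: cvg_snd. Qed.

End Cont.

Section Main.
Variable R : realType.
Variable n : nat.
Hypothesis n2 : (1 < n)%N.
Local Notation N := n.+1.
Local Notation V := ('I_N + 'I_N)%type.
Local Notation s := (@ordS N).
Local Notation X := {ptws {set V} -> R}.
Local Notation Y := {ptws 'I_N -> R}.
Local Notation cE := (@cE n).
Local Notation wE := (@wE n).
Local Notation adjW := (@adjW n).
Local Notation A := (realization R _ (M2 _ adjW)).
Local Notation B := (unit_sphere R n).

Lemma A_props (x : X) : A x ->
  [/\ forall e, 0 <= x e, \sum_e x e = 1,
      forall e, x e != 0 -> e \in edge_set _ adjW &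
      forall j, ~ [/\ x (cE j) != 0, x (wE (s j)) != 0 & x (cE (s j)) != 0]].
Proof.
move=> [h0 [h1 /(@M2E n n2 _) [hE hT]]]; split => //.
  by move=> e xe; apply: (fintype.subsetP hE); rewrite inE.
by move=> j [a b c]; apply: (hT j); rewrite !inE.
Qed.

Lemma A_intro (x : X) :
  (forall e, 0 <= x e) -> \sum_e x e = 1 ->
  (forall e, x e != 0 -> e \in edge_set _ adjW) ->
  (forall j, ~ [/\ x (cE j) != 0, x (wE (s j)) != 0 & x (cE (s j)) != 0]) ->
  A x.
Proof.
move=> h0 h1 hE hT; split => //; split => //.
apply/(@M2E n n2 _); split.
  by apply/fintype.subsetP => e; rewrite inE; apply: hE.
by move=> j; rewrite !inE; apply: hT.
Qed.


Definition yv (x : X) : 'I_N -> R := @yk R n (fun i => x (cE i)) (fun i => x (wE i)).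
Definition n2v (y : 'I_N -> R) : R := Num.sqrt (\sum_i y i ^+ 2).
Definition fF (x : X) : Y := fun j => yv x j / n2v (yv x).
Definition n1v (z : 'I_N -> R) : R := \sum_i `|z i|.
Definition gG (z : Y) : X := fun e =>
  (\sum_j ((e == cE j)%:R * Num.max (z j) 0 + (e == wE j)%:R * Num.max (- z j) 0))
    / n1v z.
Definition H1 (p : R * X) : X := fun e => (1 - p.1) * gG (fF p.2) e + p.1 * p.2 e.

Lemma sum_ind (T : finType) (t : T) (c : R) : \sum_(e : T) (e == t)%:R * c = c.
Proof.
rewrite (bigD1 t) //= eqxx mul1r big1 ?addr0 // => e /negbTE ->.
by rewrite mul0r.
Qed.

Lemma g_c z k : gG z (cE k) = Num.max (z k) 0 / n1v z.
Proof.
rewrite /gG; congr (_ / _).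
rewrite (bigD1 k) //= eqxx (negbTE (cE_wE _ _ _)) mul1r mul0r addr0 big1 ?addr0 //.
move=> j jk; rewrite (inj_eq (@cE_inj n n2)) eq_sym (negbTE jk) (negbTE (cE_wE _ _ _)).
by rewrite !mul0r addr0.
Qed.

Lemma g_w z k : gG z (wE k) = Num.max (- z k) 0 / n1v z.
Proof.
rewrite /gG; congr (_ / _).
rewrite (bigD1 k) //= eqxx eq_sym (negbTE (cE_wE _ _ _)) mul1r mul0r add0r big1 ?addr0 //.
move=> j jk; rewrite (inj_eq (@wE_inj n)) (eq_sym k j) (negbTE jk) eq_sym (negbTE (cE_wE _ _ _)).
by rewrite !mul0r addr0.
Qed.

Lemma g_0 z e : (forall j, e != cE j) -> (forall j, e != wE j) -> gG z e = 0.
Proof.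
move=> hc hw; rewrite /gG big1 ?mul0r // => j _.
by rewrite (negbTE (hc j)) (negbTE (hw j)) !mul0r addr0.
Qed.

Lemma maxpn (u : R) : Num.max u 0 + Num.max (- u) 0 = `|u|.
Proof.
case: (boolP (0 <= u)) => h.
  rewrite (max_l h) max_r ?ger0_norm ?addr0 //; lra.
rewrite -ltNge in h.
rewrite max_r ?max_l ?ltr0_norm ?add0r //; lra.
Qed.

Lemma maxmn (u : R) : Num.max u 0 - Num.max (- u) 0 = u.
Proof.
case: (boolP (0 <= u)) => h.
  rewrite (max_l h) max_r ?subr0 //; lra.
rewrite -ltNge in h.
rewrite max_r ?max_l ?sub0r ?opprK //; lra.
Qed.

Lemma n1v_ge0 z : 0 <= n1v z.
Proof. by apply: sumr_ge0 => i _; exact: normr_ge0. Qed.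

Lemma g_sum z : n1v z != 0 -> \sum_e gG z e = 1.
Proof.
move=> hz; rewrite /gG -mulr_suml exchange_big /=.
under eq_bigr do rewrite big_split /= !sum_ind maxpn.
by rewrite divff.
Qed.

Lemma g_ge0 z e : 0 <= gG z e.
Proof.
apply: divr_ge0; last exact: n1v_ge0.
apply: sumr_ge0 => j _; apply: addr_ge0; apply: mulr_ge0 => //;
  by rewrite le_max lexx orbT.
Qed.


Lemma max0_pos (u : R) : Num.max u 0 != 0 -> 0 < u.
Proof.
case: (boolP (0 < u)) => // h; rewrite -leNgt in h.
by rewrite max_r // eqxx.
Qed.

Lemma n1v_B z : B z -> n1v z != 0.
Proof.
move=> hz; apply/eqP => /eqP; rewrite psumr_eq0 => [/allP H|i _]; last exact: normr_ge0.
move: hz; rewrite /unit_sphere /= big1 => [/esym/eqP|i _]; first by rewrite oner_eq0.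
have := H i (mem_index_enum i); rewrite normr_eq0 => /eqP ->.
by rewrite expr0n.
Qed.

Lemma g_in_A z : B z -> A (gG z).
Proof.
move=> hz; have hn := n1v_B _ hz.
apply: A_intro.
- exact: g_ge0.
- exact: g_sum.
- move=> e; apply: contraR => he; apply/eqP; apply: g_0 => j; apply/eqP => ej;
    move: he; rewrite ej ?cE_edge ?wE_edge //.
- move=> j [_]; rewrite g_w g_c !mulf_eq0 !negb_or => /andP[/max0_pos h1 _] /andP[/max0_pos h2 _].
  lra.
Qed.

Lemma min_maxpn (u L : R) : 0 <= L ->
  Num.min (Num.max u 0 / L) (Num.max (- u) 0 / L) = 0.
Proof.
move=> hL.
case: (boolP (0 <= u)) => h.
  rewrite [Num.max (- u) 0]max_r ?mul0r; last lra.
  by rewrite min_r // divr_ge0 // le_max lexx orbT.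
rewrite -ltNge in h.
rewrite [Num.max u 0]max_r ?mul0r; last lra.
by rewrite min_l // divr_ge0 // le_max lexx orbT.
Qed.

Lemma fg_id z : B z -> fF (gG z) = z.
Proof.
move=> hz; have hn := n1v_B _ hz.
have Lp : 0 < n1v z by rewrite lt_def hn n1v_ge0.
have yE : forall j, yv (gG z) j = z j / n1v z.
  move=> j; rewrite /yv /yk !g_c !g_w min_maxpn ?n1v_ge0 // subr0 -mulrBl maxmn //.
have nE : n2v (yv (gG z)) = (n1v z)^-1.
  rewrite /n2v; under eq_bigr do rewrite yE expr_div_n.
  rewrite -mulr_suml.
  move: hz; rewrite /unit_sphere /= => ->.
  rewrite mul1r -exprVn sqrtr_sqr ger0_norm //.
  by rewrite invr_ge0 ltW.
apply/funext => j; rewrite /fF nE yE.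
rewrite invrK -mulrA mulVf ?mulr1 //.
Qed.


Lemma S_neq0 x : A x -> \sum_i yv x i ^+ 2 != 0.
Proof.
move=> hx; have [h0 h1 hE hT] := A_props _ hx.
apply/eqP => /eqP; rewrite psumr_eq0 => [/allP H|i _]; last exact: sqr_ge0.
have y0 : forall i, yv x i = 0.
  by move=> i; have := H i (mem_index_enum i); rewrite sqrf_eq0 => /eqP.
have := @yk_nonzero R n (fun i => x (cE i)) (fun i => x (wE i)) (fun i => h0 _) (fun i => h0 _) hT y0.
move=> ab.
move: h1; rewrite big1 => [/esym/eqP|e _]; first by rewrite oner_eq0.
have [//|xe] := eqVneq (x e) 0.
have [j [ej|ej]] := @edgeP n e (hE e xe); rewrite ej; by have [] := ab j.
Qed.

Lemma n2v_pos x : A x -> 0 < n2v (yv x).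
Proof.
move=> hx; rewrite /n2v sqrtr_gt0 lt_def S_neq0 //.
by apply: sumr_ge0 => i _; exact: sqr_ge0.
Qed.

Lemma f_in_B x : A x -> B (fF x).
Proof.
move=> hx; have hS := S_neq0 _ hx.
rewrite /unit_sphere /= /fF.
under eq_bigr do rewrite expr_div_n.
rewrite -mulr_suml /n2v sqr_sqrtr ?divff //.
by apply: sumr_ge0 => i _; exact: sqr_ge0.
Qed.

Lemma H1_in_A t x : 0 <= t <= 1 -> A x -> A (H1 (t, x)).
Proof.
move=> /andP[t0 t1] hx; have [h0 h1 hE hT] := A_props _ hx.
have hB := f_in_B _ hx; have hn := n1v_B _ hB.
have np := n2v_pos _ hx.
have gE : forall e, (H1 (t, x) e != 0) -> (gG (fF x) e != 0) || (x e != 0).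
  move=> e; rewrite /H1 /=; apply: contraR; rewrite negb_or => /andP[/negPn/eqP -> /negPn/eqP ->].
  by rewrite !mulr0 addr0.
apply: A_intro.
- move=> e; rewrite /H1 /=; apply: addr_ge0; apply: mulr_ge0 => //; last exact: g_ge0.
  by rewrite subr_ge0.
- rewrite /H1 /= big_split /= -!mulr_sumr g_sum // h1; lra.
- by move=> e /gE /orP[he|]; [apply: contraR he => he; apply/eqP; apply: g_0 => j;
    apply/eqP => ej; move: he; rewrite ej ?cE_edge ?wE_edge | exact: hE].
- move=> j [/gE c1 /gE w2 /gE c2].
  apply: (@key_sign R n (fun i => x (cE i)) (fun i => x (wE i)) (fun i => h0 _) (fun i => h0 _) hT j).
  have posC : forall k, gG (fF x) (cE k) != 0 -> 0 < yv x k.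
    move=> k; rewrite g_c mulf_eq0 negb_or => /andP[/max0_pos h _].
    by move: h; rewrite /fF pmulr_lgt0 // invr_gt0.
  have negW : forall k, gG (fF x) (wE k) != 0 -> yv x k < 0.
    move=> k; rewrite g_w mulf_eq0 negb_or => /andP[/max0_pos h _].
    by move: h; rewrite /fF oppr_gt0 pmulr_llt0 // invr_gt0.
  split.
  + by case/orP: c1 => [/posC ->|->]; rewrite ?orbT.
  + by case/orP: w2 => [/negW ->|->]; rewrite ?orbT.
  + by case/orP: c2 => [/posC ->|->]; rewrite ?orbT.
Qed.


Lemma cst_cont (T : topologicalType) (c : R) (x : T) : {for x, continuous (fun _ : T => c)}.
Proof. exact: cvg_cst. Qed.

Lemma sq_cont (T : topologicalType) (f : T -> R) x :
  {for x, continuous f} -> {for x, continuous (fun p => f p ^+ 2)}.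
Proof.
move=> hf.
have -> : (fun p => f p ^+ 2) = (fun p => f p * f p) by apply/funext => p; rewrite expr2.
exact: continuousM.
Qed.

Lemma yv_cont j (x : X) : {for x, continuous (fun p : X => yv p j)}.
Proof.
rewrite /yv /yk.
apply: continuousB; [apply: continuousB|apply: continuous_min]; apply: ptws_eval_cont.
Qed.

Lemma n2_cont (x : X) : {for x, continuous (fun p : X => n2v (yv p))}.
Proof.
rewrite /n2v.
apply: (@continuous_comp _ _ _ (fun p : X => \sum_i yv p i ^+ 2) (@Num.sqrt R)).
  by apply: cont_sum => i; apply: sq_cont; apply: yv_cont.
exact: sqrt_continuous.
Qed.

Lemma fmap_cont (x : X) : A x -> {for x, continuous fF}.
Proof.
move=> hx.
have h : forall j, {for x, continuous (fun p : X => yv p j * (n2v (yv p))^-1)}.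
  move=> j.
  apply: continuousM; first exact: yv_cont.
  apply: continuousV; last exact: n2_cont.
  exact: (lt0r_neq0 (n2v_pos _ hx)).
rewrite /prop_for /continuous_at.
have FX : Filter (nbhs x) by apply: nbhs_filter.
have FF : Filter (fF @ x) by apply: fmap_filter.
have H4 := @ptws_cvgP R 'I_N (fF @ x) (fF x) FF h.
refine H4.
Qed.

Lemma gmap_cont (z : Y) : n1v z != 0 -> {for z, continuous gG}.
Proof.
move=> hz.
have h : forall e, {for z, continuous (fun p : Y =>
   (\sum_j ((e == cE j)%:R * Num.max (p j) 0 + (e == wE j)%:R * Num.max (- p j) 0))
    * (n1v p)^-1)}.
  move=> e; apply: continuousM.
    apply: cont_sum => j; apply: continuousD; apply: continuousM.
    - exact: cst_cont.
    - apply: continuous_max; last exact: cst_cont.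
      exact: ptws_eval_cont.
    - exact: cst_cont.
    - apply: continuous_max; last exact: cst_cont.
      apply: continuousN; exact: ptws_eval_cont.
  apply: continuousV; first exact: hz.
  rewrite /n1v; apply: cont_sum => i.
  apply: (@continuous_comp _ _ _ (fun p : Y => p i) (@Num.norm R R)).
    exact: ptws_eval_cont.
  exact: (@norm_continuous R R^o).
rewrite /prop_for /continuous_at.
have FX : Filter (nbhs z) by apply: nbhs_filter.
have FF : Filter (gG @ z) by apply: fmap_filter.
have H4 := @ptws_cvgP R {set V} (gG @ z) (gG z) FF h.
refine H4.
Qed.

Lemma H1_cont (p : R * X) : A p.2 -> {for p, continuous H1}.
Proof.
move=> hp.
have hg := gmap_cont _ (n1v_B _ (f_in_B _ hp)).
have hf := fmap_cont _ hp.
have h : forall e, {for p, continuous (fun q : R * X => (1 - q.1) * gG (fF q.2) e + q.1 * q.2 e)}.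
  move=> e; apply: continuousD; apply: continuousM.
  - apply: continuousB; [exact: cst_cont | exact: fst_cont].
  - apply: (@continuous_comp _ _ _ snd (fun y : X => gG (fF y) e)).
      exact: snd_cont.
    apply: (@continuous_comp _ _ _ fF (fun y : Y => gG y e)).
      exact: hf.
    apply: (@continuous_comp _ _ _ gG (fun g : X => g e)).
      exact: hg.
    exact: ptws_eval_cont.
  - exact: fst_cont.
  - apply: (@continuous_comp _ _ _ snd (fun g : X => g e)).
      exact: snd_cont.
    exact: ptws_eval_cont.
rewrite /prop_for /continuous_at.
have FX : Filter (nbhs p) by apply: nbhs_filter.
have FF : Filter (H1 @ p) by apply: fmap_filter.
have H4 := @ptws_cvgP R {set V} (H1 @ p) (H1 p) FF h.
refine H4.
Qed.

End Main.

Lemma main_gen (R : realType) (n : nat) (n2 : (1 < n)%N) :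
  homotopy_equivalent R _ _
    (realization R _ (M2 _ (whisker_adj _ (cycle_adj n.+1))))
    (unit_sphere R n).
Proof.
exists (@fF R n), (@gG R n).
split; [|split; [|split; [|split; [|split]]]].
- apply: continuous_in_subspaceT => x; rewrite in_setE => hx.
  exact: (@fmap_cont R n n2 x hx).
- move=> _ [x hx <-]; exact: (@f_in_B R n n2 x hx).
- apply: continuous_in_subspaceT => z; rewrite in_setE => hz.
  exact: (@gmap_cont R n z (@n1v_B R n z hz)).
- move=> _ [z hz <-]; exact: (@g_in_A R n n2 z hz).
- exists (@H1 R n); split; [|split].
  + apply: continuous_in_subspaceT => p; rewrite in_setE => -[_ hp].
    exact: (@H1_cont R n n2 p hp).
  + move=> t x ht hx; exact: (@H1_in_A R n n2 t x ht hx).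
  + move=> x hx; split; apply/funext => e; rewrite /H1 /=.
    * by rewrite subr0 mul1r mul0r addr0.
    * by rewrite subrr mul0r add0r mul1r.
- exists snd; split; [|split].
  + apply: continuous_subspaceT; exact: snd_cont.
  + by move=> t x _ hx.
  + by move=> x hx; split => //=; rewrite (@fg_id R n n2 x hx).
Qed.

Local Close Scope classical_set_scope.
Local Close Scope ring_scope.

Theorem mainTheorem8 (R : realType) (m : nat) : (3 <= m)%N ->
  homotopy_equivalent R _ _
    (realization R _ (M2 _ (WC_adj m)))
    (unit_sphere R (2 * m).-1).
Proof.
case: m => [|[|[|k]]] // _.
have n2 : (1 < (2 * k.+3).-1)%N by [].
exact (@main_gen R _ n2).
Qed.
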